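(* Let $\lambda>0$ and let $D$ be an edge-minimal $\lambda$-counterexample. Let $S \subseteq V(D)$ be a set of vertices such that $N_1^+(S)$ is non-empty. Then $d_2^+(S) < \lambda\, d_1^+(S)$.
   Context: All digraphs are finite oriented simple graphs: no loops, no multiple edges, and no directed 2-cycles. For vertices $u,v$ of a digraph $D$, $d(u,v)$ is the length of a shortest directed path from $u$ to $v$, with the convention that $d(v,v)$ is the length of a shortest directed cycle through $v$ (not $0$). $N_k^+(v)$ is the set of vertices $u$ with $d(v,u)=k$, and $d_k^+(v)=|N_k^+(v)|$. For a set of vertices $S$, $N_k^+(S)$ is the set of vertices $u$ with $\min_{s\in S} d(s,u)=k$ (so $S$ may intersect $N_k^+(S)$), and $d_k^+(S)=|N_k^+(S)|$. A digraph $D$ is a $\lambda$-counterexample if $d_2^+(v) < \lambda d_1^+(v)$ for every vertex $v$ of $D$. It is an edge-minimal $\lambda$-counterexample if no digraph obtained from $D$ by deleting one or more edges (keeping all vertices) is a $\lambda$-counterexample. *)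

(* Defs.v *)
From HB Require Import structures.
From mathcomp Require Import all_boot all_order all_algebra.
Set Implicit Arguments. Unset Strict Implicit. Unset Printing Implicit Defensive.
Import Order.TTheory GRing.Theory Num.Theory.

Definition oriented_simple (T : finType) (e : rel T) : Prop :=
  (forall x, ~~ e x x) /\ (forall x y, e x y -> ~~ e y x).

Fixpoint walk (T : finType) (e : rel T) (k : nat) (x y : T) : bool :=
  match k with
  | 0 => x == y
  | k'.+1 => [exists z, e x z && walk e k' z y]
  end.

(* For u <> v this is the length of a shortest directed path; for u = v it is
   the length of a shortest directed cycle through v (a shortest positive
   closed walk is a cycle), matching the paper's convention d(v,v) != 0. *)
Definition dist_is (T : finType) (e : rel T) (u v : T) (k : nat) : bool :=
  [&& 0 < k, walk e k u v & [forall j : 'I_k, (0 < j) ==> ~~ walk e j u v]].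

Definition Nout (T : finType) (e : rel T) (k : nat) (v : T) : {set T} :=
  [set u | dist_is e v u k].

(* N_k^+(S): vertices u with min_{s in S} d(s,u) = k. *)
Definition NoutS (T : finType) (e : rel T) (k : nat) (S : {set T}) : {set T} :=
  [set u | [&& 0 < k,
              [exists s in S, walk e k s u] &
              [forall s in S, forall j : 'I_k, (0 < j) ==> ~~ walk e j s u]]].

Local Open Scope ring_scope.

Definition counterexample (R : realFieldType) (lam : R) (T : finType) (e : rel T)
  : Prop :=
  forall v : T, (#|Nout e 2 v|%:R : R) < lam * (#|Nout e 1 v|%:R).

Definition edge_minimal_counterexample (R : realFieldType) (lam : R)
  (T : finType) (e : rel T) : Prop :=
  counterexample lam e /\
  forall e' : rel T,
    (forall x y, e' x y -> e x y) ->
    (exists x y, e x y && ~~ e' x y) ->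
    ~ counterexample lam e'.

(* Main.v *)
Require Import Defs.
From HB Require Import structures.
From mathcomp Require Import all_boot all_order all_algebra.
From mathcomp Require Import lra zify.
Import Order.TTheory GRing.Theory Num.Theory.
Set Implicit Arguments. Unset Strict Implicit.

Section S.
Variables (T : finType).

Definition outs (r : rel T) (x : T) : {set T} := [set y | r x y].
Definition N1s (r : rel T) (A : {set T}) : {set T} := [set y | [exists a in A, r a y]].

Lemma walk1 (r : rel T) x y : walk r 1 x y = r x y.
Proof.
simpl; apply/existsP/idP => [[z /andP[h /eqP<-]]|h]; first done.
by exists y; rewrite h eqxx.
Qed.

Lemma walk2 (r : rel T) x y : walk r 2 x y = [exists z, r x z && r z y].
Proof.
transitivity [exists z, r x z && walk r 1 z y]; first by [].
apply: eq_existsb => z; by rewrite walk1.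
Qed.

Lemma L1 (r : rel T) S : NoutS r 1 S = N1s r S.
Proof.
apply/setP => u; rewrite !inE.
apply/idP/idP.
- case/and3P => _ /existsP [s /andP[hs hw]] _.
  by apply/existsP; exists s; rewrite hs -walk1.
- case/existsP => s /andP[hs hw]; apply/and3P; split => //.
  + by apply/existsP; exists s; rewrite hs walk1.
  + apply/forallP => s'; apply/implyP => _; apply/forallP => j.
    by case: j => [[|j] //].
Qed.

Lemma L2 (r : rel T) S : NoutS r 2 S = N1s r (N1s r S) :\: N1s r S.
Proof.
apply/setP => u; rewrite !inE.
apply/idP/idP.
- case/and3P => _ /existsP [s /andP[hs hw]] hf.
  apply/andP; split.
  + apply/negP => /existsP [s' /andP[hs' h1]].
    move/forallP: hf => /(_ s') /implyP /(_ hs') /forallP /(_ (@Ordinal 2 1 isT)).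
    by rewrite walk1 h1.
  + rewrite walk2 in hw; case/existsP: hw => z /andP[h1 h2].
    apply/existsP; exists z; rewrite h2 andbT inE.
    by apply/existsP; exists s; rewrite hs h1.
- case/andP => hn /existsP [z /andP[hz h2]].
  rewrite inE in hz; case/existsP: hz => s /andP[hs h1].
  apply/and3P; split => //.
  + by apply/existsP; exists s; rewrite hs walk2; apply/existsP; exists z; rewrite h1 h2.
  + apply/forallP => s'; apply/implyP => hs'; apply/forallP => j.
    case: j => [[|[|j]] //] hj; rewrite walk1 /=.
    apply/negP => h; move/negP: hn; apply; apply/existsP; exists s'; by rewrite hs' h.
Qed.

Lemma L0 (r : rel T) k v : Nout r k v = NoutS r k [set v].
Proof.
apply/setP => u; rewrite !inE /dist_is.
congr [&& _, _ & _].
- apply/idP/existsP => [h|[s]]; first by exists v; rewrite inE eqxx.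
  by rewrite inE => /andP[/eqP-> ].
- apply/forallP/forallP => [h s|h j].
  + apply/implyP; rewrite inE => /eqP->; apply/forallP; exact: h.
  + by move/implyP: (h v) => /(_ (set11 v)) /forallP.
Qed.

Lemma N1s1 (r : rel T) v : N1s r [set v] = outs r v.
Proof.
apply/setP => u; rewrite !inE; apply/existsP/idP => [[s]|h].
- by rewrite inE => /andP[/eqP-> ].
- by exists v; rewrite inE eqxx.
Qed.

Lemma Nout1 (r : rel T) v : Nout r 1 v = outs r v.
Proof. by rewrite L0 L1 N1s1. Qed.
Lemma Nout2 (r : rel T) v : Nout r 2 v = N1s r (outs r v) :\: outs r v.
Proof. by rewrite L0 L2 N1s1. Qed.

End S.

Section M.
Variables (R : realFieldType) (lam : R) (T : finType) (e : rel T).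
Hypothesis hmin : edge_minimal_counterexample lam e.
Hypothesis irr : forall x, ~~ e x x.
Local Open Scope ring_scope.

Definition f (A : {set T}) := #|N1s e A :\: A|%N.

Lemma cardUD (X A : {set T}) : #|X :|: A|%N = (#|X :\: A| + #|A|)%N.
Proof.
have := cardsUI X A; rewrite cardsD; have := subset_leq_card (subsetIl X A).
lia.
Qed.

Lemma N1sU (P Q : {set T}) : N1s e (P :|: Q) = N1s e P :|: N1s e Q.
Proof.
apply/setP => u; rewrite !inE; apply/existsP/orP.
- by case=> a; rewrite inE => /andP[/orP[h|h] h']; [left|right]; apply/existsP; exists a; rewrite h h'.
- by case=> /existsP[a /andP[h h']]; exists a; rewrite inE h h' ?orbT.
Qed.

Lemma N1sI (P Q : {set T}) : N1s e (P :&: Q) \subset N1s e P :&: N1s e Q.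
Proof.
apply/subsetP => u; rewrite !inE => /existsP[a /andP[]]; rewrite inE => /andP[h1 h2] h.
by apply/andP; split; apply/existsP; exists a; rewrite ?h1 ?h2 h.
Qed.

Lemma submod (P Q : {set T}) : (f (P :|: Q) + f (P :&: Q) <= f P + f Q)%N.
Proof.
rewrite /f.
have e1 := cardUD (N1s e (P :|: Q)) (P :|: Q).
have e2 := cardUD (N1s e (P :&: Q)) (P :&: Q).
have e3 := cardUD (N1s e P) P.
have e4 := cardUD (N1s e Q) Q.
have e5 := cardsUI P Q.
have e6 := cardsUI (N1s e P :|: P) (N1s e Q :|: Q).
have e7 : N1s e (P :|: Q) :|: (P :|: Q) = (N1s e P :|: P) :|: (N1s e Q :|: Q).
  by rewrite N1sU setUACA.
have e8 : (#|N1s e (P :&: Q) :|: (P :&: Q)| <= #|(N1s e P :|: P) :&: (N1s e Q :|: Q)|)%N.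
  apply: subset_leq_card; apply/subsetP => u; rewrite in_setU => /orP[h|/setIP[h1 h2]].
  - by move/subsetP: (N1sI P Q) => /(_ u h) /setIP [h1 h2]; rewrite in_setI !in_setU h1 h2.
  - by rewrite in_setI !in_setU h1 h2 !orbT.
rewrite e7 in e1. lia.
Qed.

Lemma minA s (A : {set T}) : A \subset outs e s -> (exists y, e s y && (y \notin A)) ->
  lam * (#|A|%:R) <= (#|N1s e A :\: A|%:R).
Proof.
move=> hA [y hy].
pose e' : rel T := fun x z => if x == s then z \in A else e x z.
have he' : forall x z, e' x z -> e x z.
  move=> x z; rewrite /e'; case: eqP => [->|//] h.
  by move/subsetP: hA => /(_ z h); rewrite inE.
have hne : exists x z, e x z && ~~ e' x z.
  by exists s, y; rewrite /e' eqxx.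
have := hmin.2 e' he' hne.
rewrite leNgt => hnc; apply/negP => hlt; apply: hnc => v.
have hsub : forall X, N1s e' X \subset N1s e X.
  move=> X; apply/subsetP => u; rewrite !inE => /existsP[a /andP[ha h]].
  by apply/existsP; exists a; rewrite ha he'.
case: (eqVneq v s) => [->|hv].
- have o1 : outs e' s = A by apply/setP => u; rewrite inE /e' eqxx.
  have o2 : N1s e' A = N1s e A.
    apply/setP => u; rewrite !inE; apply: eq_existsb => a.
    case ha: (a \in A) => //=; rewrite /e'; case: eqP => // hs.
    by move/subsetP: hA => /(_ a ha); rewrite inE hs (negbTE (irr s)).
  by rewrite Nout1 Nout2 o1 o2.
- have o1 : outs e' v = outs e v by apply/setP => u; rewrite !inE /e' (negbTE hv).
  rewrite Nout1 Nout2 o1.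
  have := hmin.1 v; rewrite Nout1 Nout2; apply: le_lt_trans; rewrite ler_nat.
  apply: subset_leq_card; apply: setSD; exact: hsub.
Qed.

Lemma fQ x : (f (outs e x))%:R < lam * (#|outs e x|%:R).
Proof. by have := hmin.1 x; rewrite Nout1 Nout2. Qed.

Lemma key (P : {set T}) x : (P = set0 \/ (f P)%:R < lam * (#|P|%:R)) ->
  (f (P :|: outs e x))%:R < lam * (#|P :|: outs e x|%:R).
Proof.
case=> [->|hP]; first by rewrite set0U fQ.
set Q := outs e x.
have [sQP|nQP] := boolP (Q \subset P); first by rewrite (setUidPl sQP).
have hm : lam * (#|P :&: Q|%:R) <= (f (P :&: Q))%:R.
  apply: (@minA x); first exact: subsetIr.
  case/subsetPn: nQP => y hy hny; exists y; move: hy; rewrite /Q inE => ->.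
  by rewrite in_setI negb_and hny.
have hs := submod P Q.
have e5 := cardsUI P Q.
have hQ := fQ x; rewrite -/Q in hQ.
move: hs e5 hm hQ hP.
move: (f (P :|: Q)) (f (P :&: Q)) (f P) (f Q) #|P :|: Q|%N #|P :&: Q|%N #|P|%N #|Q|%N.
move=> a b c d n1 n2 n3 n4; rewrite -(ler_nat R) natrD => hs.
move/(congr1 (fun k : nat => (k%:R : R))); rewrite !natrD => e5.
have : lam * n1%:R + lam * n2%:R = lam * n3%:R + lam * n4%:R by rewrite -!mulrDr e5.
move: hs; rewrite natrD.
move: (a%:R : R) (b%:R : R) (c%:R : R) (d%:R : R) (lam * n1%:R) (lam * n2%:R) (lam * n3%:R) (lam * n4%:R).
move=> A B C D X Y Z W; lra.
Qed.

Lemma mainS n (S : {set T}) : #|S| = n ->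
  N1s e S = set0 \/ (f (N1s e S))%:R < lam * (#|N1s e S|%:R).
Proof.
elim: n S => [|n IH] S hS.
- left; move/cards0_eq: hS => ->; apply/setP => u; rewrite !inE.
  by apply/existsP => [[a]]; rewrite inE.
- have : (0 < #|S|)%N by rewrite hS.
  case/card_gt0P => x hx.
  have hS0 : #|S :\ x| = n by move: hS; rewrite (cardsD1 x S) hx; case.
  have -> : S = (S :\ x) :|: [set x] by rewrite setUC setD1K.
  right; rewrite N1sU N1s1; apply: key; exact: IH.
Qed.
End M.


Local Open Scope ring_scope.

Theorem lemma1 (R : realFieldType) (lam : R) (T : finType) (e : rel T)
  (hlam : 0 < lam) (hD : oriented_simple e)
  (hmin : edge_minimal_counterexample lam e)
  (S : {set T}) (hS : NoutS e 1 S != set0) :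
  (#|NoutS e 2 S|%:R : R) < lam * (#|NoutS e 1 S|%:R).
Proof.
rewrite L1 in hS; rewrite L2 L1.
case: (mainS hmin hD.1 (erefl #|S|)) => [h|//].
by rewrite h eqxx in hS.
Qed.
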